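(* Let $R$ be a commutative ring with nonzero identity, $S$ a multiplicatively closed subset of $R$, and $\delta$ an expansion of ideals of $R$; let $\delta_S$ be the expansion of ideals of $S^{-1}R$ given by $\delta_S(S^{-1}I)=S^{-1}(\delta(I))$. Let $I$ be an ideal of $R$. (1) If $I$ is a $\delta$-$n$-ideal of $R$ with $I\cap S=\emptyset$, then $S^{-1}I$ is a $\delta_S$-$n$-ideal of $S^{-1}R$. (2) If $S\cap Z(R)=S\cap Z_{\delta(I)}(R)=\emptyset$ and $S^{-1}I$ is a $\delta_S$-$n$-ideal of $S^{-1}R$, then $I$ is a $\delta$-$n$-ideal of $R$.
   Context: An expansion of ideals of a ring $R$ is a map $\delta$ from the set of ideals of $R$ to itself such that $I\subseteq\delta(I)$ for every ideal $I$, and $\delta(I)\subseteq\delta(J)$ whenever $I\subseteq J$. $\sqrt{0}$ denotes the nilradical of the ring in question. Given an expansion $\delta$ of ideals of a ring $R$, a proper ideal $I$ of $R$ is a $\delta$-$n$-ideal if whenever $a,b\in R$ with $ab\in I$ and $a\notin\sqrt{0}$, then $b\in\delta(I)$. $Z(R)$ denotes the set of zero-divisors of $R$, and for a proper ideal $J$ of $R$, $Z_J(R)=\{r\in R: rs\in J \text{ for some } s\in R\setminus J\}$. *)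

(* Defs.v *)
From HB Require Import structures.
From mathcomp Require Import all_boot all_order all_algebra.
Set Implicit Arguments. Unset Strict Implicit. Unset Printing Implicit Defensive.
Import GRing.Theory.
Local Open Scope ring_scope.

Definition is_ideal (T : comPzRingType) (I : T -> Prop) : Prop :=
  [/\ I 0, (forall x y, I x -> I y -> I (x + y)) & (forall r x, I x -> I (r * x))].

Definition in_nilrad (T : comPzRingType) (x : T) : Prop := exists n : nat, x ^+ n = 0.

Definition expansion (T : comPzRingType) (d : (T -> Prop) -> (T -> Prop)) : Prop :=
  (forall I, is_ideal I -> is_ideal (d I)) /\
  (forall I, is_ideal I -> forall x, I x -> d I x) /\
  (forall I J, is_ideal I -> is_ideal J -> (forall x, I x -> J x) ->
       forall x, d I x -> d J x).

Definition delta_n_ideal (T : comPzRingType) (d : (T -> Prop) -> (T -> Prop))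
  (I : T -> Prop) : Prop :=
  [/\ is_ideal I, ~ I 1 &
      forall a b, I (a * b) -> ~ in_nilrad a -> d I b].

Definition mult_closed (T : comPzRingType) (S : T -> Prop) : Prop :=
  S 1 /\ forall s t, S s -> S t -> S (s * t).

Definition zero_divisor (T : comPzRingType) (r : T) : Prop :=
  exists s : T, s != 0 /\ r * s = 0.

Definition ZJ (T : comPzRingType) (J : T -> Prop) (r : T) : Prop :=
  exists s : T, ~ J s /\ J (r * s).

(* f : R -> L is a localization of R at S (L "is" S^{-1}R, f = canonical map) *)
Definition is_localization (R L : comPzRingType) (S : R -> Prop)
  (f : {rmorphism R -> L}) : Prop :=
  [/\ (forall s, S s -> exists t : L, f s * t = 1),
      (forall y : L, exists a s, S s /\ f s * y = f a) &
      (forall a, f a = 0 -> exists s, S s /\ s * a = 0)].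

(* S^{-1} I = { a/s : a in I, s in S } as a subset of L *)
Definition loc_ideal (R L : comPzRingType) (S : R -> Prop)
  (f : {rmorphism R -> L}) (I : R -> Prop) : L -> Prop :=
  fun y => exists a s, I a /\ S s /\ f s * y = f a.

(* Main.v *)
Require Import Defs.
From mathcomp Require Import all_boot all_order all_algebra.
From mathcomp Require Import ring.
From Stdlib Require Import Classical.
Import GRing.Theory.
Local Open Scope ring_scope.

Lemma nz_of (R : comNzRingType) (t r : R) : ~ zero_divisor t -> t * r = 0 -> r = 0.
Proof.
move=> hz h; case: (eqVneq r 0) => // hr; exfalso; apply: hz; by exists r.
Qed.

Arguments nz_of {R t r}.

Theorem proposition2p24
  (R : comNzRingType) (L : comPzRingType) (S : R -> Prop)
  (f : {rmorphism R -> L})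
  (d : (R -> Prop) -> (R -> Prop)) (dS : (L -> Prop) -> (L -> Prop))
  (hS : mult_closed S) (hf : is_localization S f) (hd : expansion d)
  (hdS : expansion dS)
  (hdSdef : forall J, is_ideal J ->
     forall y, dS (loc_ideal S f J) y <-> loc_ideal S f (d J) y)
  (I : R -> Prop) (hI : is_ideal I) :
  (delta_n_ideal d I -> (forall s, S s -> ~ I s) ->
     delta_n_ideal dS (loc_ideal S f I)) /\
  ((forall s, S s -> ~ zero_divisor s) -> (forall s, S s -> ~ ZJ (d I) s) ->
     delta_n_ideal dS (loc_ideal S f I) -> delta_n_ideal d I).
Proof.
case: hS => S1 SM; case: hf => hinv hsurj hker; case: hI => I0 ID IM.
have hI : is_ideal I by split.
split.
- case=> _ nI1 hn hdisj; split.
  + split.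
    * exists 0, 1; split=> //; by rewrite mulr0 rmorph0.
    * move=> x y [a [s [Ia [Ss Hx]]]] [b [t [Ib [St Hy]]]].
      exists (t * a + s * b), (s * t); split; [apply: ID; apply: IM => // | split; first exact: SM].
      by rewrite rmorphD !rmorphM -Hx -Hy; ring.
    * move=> r x [a [s [Ia [Ss Hx]]]].
      have [c [u [Su Hr]]] := hsurj r.
      exists (c * a), (u * s); split; [exact: IM | split; first exact: SM].
      by rewrite !rmorphM -Hx -Hr; ring.
  + move=> [a [s [Ia [Ss H]]]].
    have : f (s - a) = 0 by rewrite rmorphB -H mulr1 subrr.
    move=> /hker [t [St Ht]].
    apply: (hdisj (t * s)); first exact: SM.
    have -> : t * s = t * a.
      by apply/eqP; rewrite -subr_eq0 -mulrBr Ht.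
    exact: IM.
  + move=> x y [c [u [Ic [Su Hxy]]]] Hx.
    apply/hdSdef => //.
    have [a [s [Ss Hxa]]] := hsurj x.
    have [b [t [St Hyb]]] := hsurj y.
    have : f (u * a * b - s * t * c) = 0.
      by rewrite rmorphB !rmorphM -Hxa -Hyb -Hxy; ring.
    move=> /hker [v [Sv Hv]].
    have E : a * (v * u * b) = v * (s * t * c).
      have : v * (u * a * b) = v * (s * t * c).
        by apply/eqP; rewrite -subr_eq0 -mulrBr Hv.
      by move=> <-; ring.
    have na : ~ in_nilrad a.
      move=> [n Hn]; apply: Hx; exists n.
      have [w Hw] := hinv s Ss.
      have : f (a ^+ n) = 0 by rewrite Hn rmorph0.
      rewrite rmorphXn -Hxa exprMn => H0.
      have -> : x ^+ n = (w * f s) ^+ n * x ^+ n by rewrite [w * _]mulrC Hw expr1n mul1r.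
      by rewrite exprMn -mulrA H0 mulr0.
    have Hd := hn a (v * u * b).
    rewrite E in Hd; rewrite mulrA in Hd; have := Hd (IM _ _ Ic) na => Hdb.
    exists (v * u * b), (v * u * t); split => //; split; first exact: (SM _ _ (SM _ _ Sv Su) St).
    by rewrite !rmorphM -Hyb; ring.
- move=> hz hzj [_ nL1 hn]; split => //.
  + move=> I1; apply: nL1; exists 1, 1; split=> //; split=> //; by rewrite rmorph1 mulr1.
  + move=> a b Iab na.
    have Hl : loc_ideal S f I (f a * f b).
      by exists (a * b), 1; split=> //; split=> //; rewrite rmorph1 mul1r rmorphM.
    have nfa : ~ in_nilrad (f a).
      move=> [n Hn]; apply: na; exists n.
      have : f (a ^+ n) = 0 by rewrite rmorphXn.
      move=> /hker [t [St Ht]]; apply: (nz_of (hz t St)); exact: Ht.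
    have := hn _ _ Hl nfa.
    move=> /(hdSdef _ hI) [c [s [Dc [Ss H]]]].
    have : f (s * b - c) = 0 by rewrite rmorphB rmorphM H subrr.
    move=> /hker [t [St Ht]].
    have E : s * b = c by apply/eqP; rewrite -subr_eq0; apply/eqP; exact: (nz_of (hz t St) Ht).
    case: (classic (d I b)) => // nb; exfalso.
    apply: (hzj s Ss); exists b; split => //; by rewrite E.
Qed.
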